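(* For all positive integers $r$ and $N$ there exists a partition $\mathbb N=A_1\cup A_2\cup\cdots\cup A_r$ into pairwise disjoint sets such that (i) $A_i-n$ is a central set for every $1\le i\le r$ and every $1\le n\le N$; and (ii) for every $n>N$, exactly one of the sets $A_1-n,A_2-n,\dots,A_r-n$ is a central set.
   Context: $\mathbb N=\{0,1,2,\dots\}$; for $A\subseteq\mathbb N$ and $n\in\mathbb N$, $A-n=\{m\in\mathbb N: m+n\in A\}$. $\beta\mathbb N$ is the set of ultrafilters on $\mathbb N$ with addition $A\in p+q$ iff $\{n:A-n\in p\}\in q$; a minimal idempotent is a non-principal ultrafilter $p$ with $p+p=p$ lying in the smallest two-sided ideal of $\beta\mathbb N$; a set is central if it belongs to some minimal idempotent. *)

(* Defs.v *)
From Stdlib Require Import Arith.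

Definition nset := nat -> Prop.

Definition shift (A : nset) (n : nat) : nset := fun m => A (m + n).

Definition is_ultrafilter (p : nset -> Prop) : Prop :=
  p (fun _ => True) /\
  ~ p (fun _ => False) /\
  (forall A B : nset, p A -> (forall m, A m -> B m) -> p B) /\
  (forall A B : nset, p A -> p B -> p (fun m => A m /\ B m)) /\
  (forall A : nset, p A \/ p (fun m => ~ A m)).

Definition nonprincipal (p : nset -> Prop) : Prop :=
  forall n : nat, ~ p (fun m => m = n).

Definition uadd (p q : nset -> Prop) : nset -> Prop :=
  fun A => q (fun n => p (shift A n)).

Definition ueq (p q : nset -> Prop) : Prop := forall A : nset, p A <-> q A.

Definition two_sided_ideal (I : (nset -> Prop) -> Prop) : Prop :=
  (exists p, is_ultrafilter p /\ I p) /\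
  (forall p, I p -> is_ultrafilter p) /\
  (forall p q, I p -> is_ultrafilter q -> I (uadd p q) /\ I (uadd q p)).

Definition in_K (p : nset -> Prop) : Prop :=
  is_ultrafilter p /\ forall I, two_sided_ideal I -> I p.

Definition minimal_idempotent (p : nset -> Prop) : Prop :=
  is_ultrafilter p /\ nonprincipal p /\ ueq (uadd p p) p /\ in_K p.

Definition central (A : nset) : Prop :=
  exists p, minimal_idempotent p /\ p A.

(* Main.v *)
Require Import Defs.
From Stdlib Require Import Arith Lia Classical FunctionalExtensionality PropExtensionality.
From mathcomp Require classical_sets boolp.
Set Bullet Behavior "Strict Subproofs".

Lemma my_zorn (T : Type) (t0 : T) (R : T -> T -> Prop) :
  (forall t, R t t) -> (forall a b c, R a b -> R b c -> R a c) ->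
  (forall A : T -> Prop, (forall s t, A s -> A t -> R s t \/ R t s) ->
     exists t, forall s, A s -> R s t) ->
  exists t, forall s, R t s -> R s t.
Proof.
  intros Hr Ht Hc.
  destruct (@classical_sets.ZL_preorder T t0 (fun a b => boolp.asbool (R a b))) as [t Ht0].
  - intro t. apply boolp.asboolT. apply Hr.
  - intros a b c H1 H2. apply boolp.asboolT. apply boolp.asboolW in H1. apply boolp.asboolW in H2. eauto.
  - intros A HA. destruct (Hc A) as [t Htt].
    + intros s u Hs Hu. destruct (HA s u Hs Hu) as [H|H]; [left|right]; apply boolp.asboolW; exact H.
    + exists t. intros s Hs. apply boolp.asboolT. auto.
  - exists t. intros s Hs. apply boolp.asboolW. apply Ht0. apply boolp.asboolT. exact Hs.
Qed.

Definition uf := nset -> Prop.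

Section UF.
Variable p : uf.
Hypothesis Hp : is_ultrafilter p.
Lemma uf_top : p (fun _ => True). Proof. apply Hp. Qed.
Lemma uf_bot : ~ p (fun _ => False). Proof. apply Hp. Qed.
Lemma uf_up A B : p A -> (forall m, A m -> B m) -> p B. Proof. apply Hp. Qed.
Lemma uf_cap A B : p A -> p B -> p (fun m => A m /\ B m). Proof. apply Hp. Qed.
Lemma uf_comp A : p A \/ p (fun m => ~ A m). Proof. apply Hp. Qed.
Lemma uf_ne A : p A -> exists m, A m.
Proof. intro H. apply NNPP. intro H'. apply uf_bot. apply (uf_up _ _ H).
  intros m Hm. apply H'. eauto. Qed.
Lemma uf_compl A : ~ p A -> p (fun m => ~ A m).
Proof. intro H. destruct (uf_comp A); tauto. Qed.
Lemma uf_not A : p A -> p (fun m => ~ A m) -> False.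
Proof. intros H1 H2. destruct (uf_ne _ (uf_cap _ _ H1 H2)) as [m [? ?]]. tauto. Qed.
End UF.

Lemma uf_eq p q : is_ultrafilter p -> is_ultrafilter q -> (forall A, p A -> q A) -> p = q.
Proof.
  intros Hp Hq H. apply functional_extensionality. intro A.
  apply propositional_extensionality. split; [apply H|].
  intro HA. apply NNPP. intro HnA. apply (uf_not q Hq A HA). apply H. apply uf_compl; auto.
Qed.

Lemma shift_shift A n m : shift (shift A n) m = shift A (m + n).
Proof. apply functional_extensionality. intro k. unfold shift. f_equal. lia. Qed.

Lemma uadd_ultra p q : is_ultrafilter p -> is_ultrafilter q -> is_ultrafilter (uadd p q).
Proof.
  intros Hp Hq. unfold uadd. split; [|split; [|split; [|split]]].
  - apply (uf_up q Hq _ _ (uf_top q Hq)). intros. apply (uf_top p Hp).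
  - intro H. apply (uf_bot q Hq). apply (uf_up q Hq _ _ H). intros n Hn. apply (uf_bot p Hp Hn).
  - intros A B HA HAB. apply (uf_up q Hq _ _ HA). intros n Hn. apply (uf_up p Hp _ _ Hn).
    unfold shift. intros m; apply HAB.
  - intros A B HA HB. apply (uf_up q Hq _ _ (uf_cap q Hq _ _ HA HB)).
    intros n [H1 H2]. apply (uf_cap p Hp _ _ H1 H2).
  - intro A. destruct (uf_comp q Hq (fun n => p (shift A n))) as [H|H]; [left; exact H|right].
    apply (uf_up q Hq _ _ H). intros n Hn. apply (uf_compl p Hp); auto.
Qed.

Lemma uadd_assoc p q s : uadd (uadd p q) s = uadd p (uadd q s).
Proof.
  apply functional_extensionality. intro A. unfold uadd. f_equal.
  apply functional_extensionality. intro n. f_equal.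
  apply functional_extensionality. intro m. rewrite shift_shift. reflexivity.
Qed.

Definition pr (n : nat) : uf := fun A => A n.
Lemma pr_ultra n : is_ultrafilter (pr n).
Proof. unfold pr. split; [|split;[|split;[|split]]]; auto. intro A. apply classic. Qed.

Definition filt (F : uf) : Prop :=
  F (fun _ => True) /\ (forall X, F X -> exists m, X m) /\
  (forall X Y, F X -> (forall m, X m -> Y m) -> F Y) /\
  (forall X Y, F X -> F Y -> F (fun m => X m /\ Y m)).

Lemma UL (B : nset -> Prop) :
  (forall X Y, B X -> B Y -> exists Z, B Z /\ forall m, Z m -> X m /\ Y m) ->
  (forall X, B X -> exists m, X m) ->
  exists p, is_ultrafilter p /\ forall X, B X -> p X.
Proof.
  intros Bcap Bne.
  set (F0 := fun X : nset => (forall m, X m) \/ exists Y, B Y /\ forall m, Y m -> X m).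
  assert (HF0 : filt F0 /\ forall X, B X -> F0 X).
  { split; [split; [|split; [|split]]|].
    - left; auto.
    - intros X [H|[Y [HY HYX]]]; [exists 0; auto|]. destruct (Bne Y HY) as [m Hm]; eauto.
    - intros X Y [H|[Z [HZ HZX]]] HXY; [left; auto|right; exists Z; auto].
    - intros X Y [H1|[Z1 [HZ1 H1]]] [H2|[Z2 [HZ2 H2]]].
      + left; auto.
      + right. exists Z2. split; auto.
      + right. exists Z1. split; auto.
      + destruct (Bcap Z1 Z2 HZ1 HZ2) as [Z [HZ HZZ]]. right. exists Z. split; auto.
        intros m Hm. destruct (HZZ m Hm); auto.
    - intros X HX. right. exists X. auto. }
  set (T := {F : uf | filt F /\ forall X, B X -> F X}).
  assert (F0sub : forall F : T, forall X, F0 X -> proj1_sig F X).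
  { intros [F [[Ht [Hn [Hu Hc]]] HB]] X [H|[Y [HY HYX]]]; simpl.
    - apply (Hu _ _ Ht). auto.
    - apply (Hu _ _ (HB Y HY)). auto. }
  destruct (my_zorn T (exist _ F0 HF0) (fun F G => forall X, proj1_sig F X -> proj1_sig G X))
    as [[F [HF HFB]] Hmax].
  - auto.
  - auto.
  - intros A HA.
    set (U := fun X => F0 X \/ exists F : T, A F /\ proj1_sig F X).
    assert (HU : filt U /\ forall X, B X -> U X).
    { destruct HF0 as [[Ht [Hn [Hu Hc]]] HB].
      split; [split; [|split; [|split]]|].
      - left; auto.
      - intros X [H|[G [_ HG]]]; [auto|]. destruct G as [G [[? [Hn' ?]] ?]]. simpl in HG. eauto.
      - intros X Y [H|[G [HG1 HG]]] HXY; [left; eauto|right; exists G; split; auto].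
        destruct G as [G [[? [? [Hu' ?]]] ?]]. simpl in *. eauto.
      - intros X Y [H1|[G1 [HG1 H1]]] [H2|[G2 [HG2 H2]]].
        + left; auto.
        + right. exists G2. split; auto. pose proof (F0sub G2 X H1).
          destruct G2 as [G [[? [? [? Hc']]] ?]]. simpl in *. auto.
        + right. exists G1. split; auto. pose proof (F0sub G1 Y H2).
          destruct G1 as [G [[? [? [? Hc']]] ?]]. simpl in *. auto.
        + destruct (HA G1 G2 HG1 HG2) as [H|H].
          * right. exists G2. split; auto. apply H in H1.
            destruct G2 as [G [[? [? [? Hc']]] ?]]. simpl in *. auto.
          * right. exists G1. split; auto. apply H in H2.
            destruct G1 as [G [[? [? [? Hc']]] ?]]. simpl in *. auto.
      - intros X HX. left. auto. }
    exists (exist _ U HU). intros s Hs X HX. simpl. right. exists s. auto.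
  - exists F. destruct HF as [Ht [Hn [Hu Hc]]].
    split; [split; [|split; [|split; [|split]]]|]; auto.
    + intro H. destruct (Hn _ H). auto.
    + intro A. destruct (classic (F A)) as [H|H]; [left; auto|right].
      apply NNPP. intro H'.
      set (G := fun X => exists Y, F Y /\ forall m, A m -> Y m -> X m).
      assert (HG : filt G /\ forall X, B X -> G X).
      { split; [split; [|split; [|split]]|].
        - exists (fun _ => True). auto.
        - intros X [Y [HY HYX]]. apply NNPP. intro Hne. apply H'.
          apply (Hu _ _ HY). intros m Hm HAm. apply Hne. exists m. auto.
        - intros X Y [Z [HZ HZX]] HXY. exists Z. auto.
        - intros X Y [Z1 [HZ1 H1]] [Z2 [HZ2 H2]]. exists (fun m => Z1 m /\ Z2 m).
          split; auto. intros m Hm [? ?]; auto.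
        - intros X HX. exists X. split; auto. }
      apply H. apply (Hmax (exist _ G HG)).
      * simpl. intros X HX. exists X. auto.
      * simpl. exists (fun _ => True). auto.
Qed.

Definition common (C : uf -> Prop) (A : nset) := forall q, C q -> q A.
Definition closed (C : uf -> Prop) :=
  forall p, is_ultrafilter p -> (forall A, common C A -> p A) -> C p.
Definition good (C : uf -> Prop) := closed C /\ (exists q, C q) /\ (forall q, C q -> is_ultrafilter q).
Definition chain (A : (uf -> Prop) -> Prop) :=
  forall C D, A C -> A D -> (forall q, C q -> D q) \/ (forall q, D q -> C q).
Definition inter (A : (uf -> Prop) -> Prop) : uf -> Prop := fun p => forall C, A C -> C p.

Lemma chain_inter (A : (uf -> Prop) -> Prop) :
  (forall C, A C -> good C) -> chain A -> exists p, is_ultrafilter p /\ inter A p.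
Proof.
  intros HA Hch.
  destruct (UL (fun X => exists C, A C /\ common C X)) as [p [Hp HpB]].
  - intros X Y [C1 [H1 HX]] [C2 [H2 HY]].
    destruct (Hch C1 C2 H1 H2) as [H|H].
    + exists (fun m => X m /\ Y m). split; auto. exists C1. split; auto.
      intros q Hq. destruct (HA C1 H1) as [_ [_ Hu]]. apply uf_cap; [apply Hu; auto|apply HX; auto|apply HY; apply H; auto].
    + exists (fun m => X m /\ Y m). split; auto. exists C2. split; auto.
      intros q Hq. destruct (HA C2 H2) as [_ [_ Hu]]. apply uf_cap; [apply Hu; auto|apply HX; apply H; auto|apply HY; auto].
  - intros X [C [HC HX]]. destruct (HA C HC) as [_ [[q Hq] Hu]].
    apply (uf_ne q (Hu q Hq)). apply HX; auto.
  - exists p. split; auto. intros C HC. destruct (HA C HC) as [Hcl _].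
    apply Hcl; auto. intros X HX. apply HpB. eauto.
Qed.

Lemma closed_inter A : (forall C, A C -> closed C) -> closed (inter A).
Proof.
  intros H p Hp Hc C HC. apply (H C HC p Hp). intros X HX. apply Hc.
  intros q Hq. apply HX. apply Hq. auto.
Qed.

Lemma min_lemma (Phi : (uf -> Prop) -> Prop) C0 :
  (forall C, Phi C -> good C) ->
  (forall A, (forall C, A C -> Phi C) -> chain A -> (exists C, A C) ->
     (exists p, is_ultrafilter p /\ inter A p) -> Phi (inter A)) ->
  Phi C0 ->
  exists M, Phi M /\ forall C, Phi C -> (forall q, C q -> M q) -> forall q, M q -> C q.
Proof.
  intros Hg Hch H0.
  set (T := {C | Phi C}).
  destruct (my_zorn T (exist _ C0 H0) (fun a b => forall q, proj1_sig b q -> proj1_sig a q))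
    as [[M HM] Hmax]; auto.
  - intros A HA.
    destruct (classic (exists t, A t)) as [[t Ht]|Hn].
    + set (B := fun C => exists t, A t /\ proj1_sig t = C).
      assert (HB : Phi (inter B)).
      { apply Hch.
        - intros C [t' [_ <-]]. apply proj2_sig.
        - intros C D [t1 [H1 <-]] [t2 [H2 <-]]. destruct (HA t1 t2 H1 H2); auto.
        - exists (proj1_sig t). exists t. auto.
        - apply chain_inter.
          + intros C [t' [_ <-]]. apply Hg, proj2_sig.
          + intros C D [t1 [H1 <-]] [t2 [H2 <-]]. destruct (HA t1 t2 H1 H2); auto. }
      exists (exist _ _ HB). intros s Hs q Hq. simpl in Hq. apply Hq. exists s. auto.
    + exists (exist _ C0 H0). intros s Hs. exfalso. eauto.
  - exists M. split; auto. intros C HC HCM q Hq.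
    apply (Hmax (exist _ C HC)); auto.
Qed.

Definition hat (e : uf) (A : nset) : nset := fun n => e (shift A n).

Lemma image_closed (T : uf -> Prop) e : closed T -> (forall t, T t -> is_ultrafilter t) ->
  is_ultrafilter e -> closed (fun p => exists t, T t /\ p = uadd e t).
Proof.
  intros HT HTu He p Hp Hc.
  destruct (UL (fun X => exists D A, common T D /\ p A /\ X = (fun n => D n /\ hat e A n)))
    as [t [Ht HtB]].
  - intros X Y [D1 [A1 [HD1 [HA1 ->]]]] [D2 [A2 [HD2 [HA2 ->]]]].
    exists (fun n => (D1 n /\ D2 n) /\ hat e (fun m => A1 m /\ A2 m) n). split.
    + exists (fun n => D1 n /\ D2 n), (fun m => A1 m /\ A2 m). split; [|split]; auto.
      * intros q Hq. apply uf_cap; [apply HTu; auto|apply HD1; auto|apply HD2; auto].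
      * apply uf_cap; auto.
    + intros m [[? ?] Hh]. unfold hat in *. repeat split; auto;
      (apply (uf_up e He _ _ Hh); unfold shift; tauto).
  - intros X [D [A [HD [HA ->]]]]. apply NNPP. intro Hn.
    apply (uf_not p Hp A HA). apply Hc. intros q [t [Ht ->]].
    unfold uadd. apply (uf_up t (HTu t Ht) D); [apply HD; auto|].
    intros n Hn'. apply (uf_compl e He). intro He'. apply Hn. exists n. split; auto.
  - exists t. assert (TT : T t).
    { apply HT; auto. intros D HD.
      assert (HB : exists D0 A0, common T D0 /\ p A0 /\
         (fun n => D n /\ hat e (fun _ => True) n) = (fun n => D0 n /\ hat e A0 n)).
      { exists D, (fun _ => True). split; [auto|split; [apply (uf_top p Hp)|reflexivity]]. }
      apply (uf_up t Ht _ _ (HtB _ HB)). tauto. }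
    split; auto. apply uf_eq; auto.
    + apply uadd_ultra; auto.
    + intros A HA. unfold uadd.
      assert (HB : exists D0 A0, common T D0 /\ p A0 /\
         (fun n => True /\ hat e A n) = (fun n => D0 n /\ hat e A0 n)).
      { exists (fun _ => True), A. split; [|split; [auto|reflexivity]].
        intros q Hq. apply (uf_top q (HTu q Hq)). }
      apply (uf_up t Ht _ _ (HtB _ HB)). unfold hat. tauto.
Qed.

Lemma stab_closed (T : uf -> Prop) e : closed T -> (forall t, T t -> is_ultrafilter t) ->
  is_ultrafilter e -> closed (fun t => T t /\ uadd e t = e).
Proof.
  intros HT HTu He p Hp Hc. assert (TP : T p).
  { apply HT; auto. intros A HA. apply Hc. intros q [Hq _]. apply HA; auto. }
  split; auto. symmetry. apply uf_eq; auto.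
  - apply uadd_ultra; auto.
  - intros A HA. unfold uadd. apply Hc. intros q [Hq Hqe]. rewrite <- Hqe in HA. exact HA.
Qed.

Definition semigroup (S : uf -> Prop) := forall a b, S a -> S b -> S (uadd a b).

Lemma ellis (S : uf -> Prop) : good S -> semigroup S -> exists e, S e /\ uadd e e = e.
Proof.
  intros HS Hsg.
  destruct (min_lemma (fun C => good C /\ semigroup C /\ forall q, C q -> S q) S)
    as [M [[HMg [HMs HMS]] Hmin]].
  - tauto.
  - intros A HA Hch [C0 HC0] [p [Hp Hpi]]. split; [split; [|split]|split].
    + apply closed_inter. intros C HC. apply HA. auto.
    + eauto.
    + intros q Hq. destruct (HA C0 HC0) as [[_ [_ Hs]] _]. apply Hs. apply Hq; auto.
    + intros a b Ha Hb C HC. destruct (HA C HC) as [_ [Hs _]]. apply Hs; [apply Ha|apply Hb]; auto.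
    + intros q Hq. destruct (HA C0 HC0) as [_ [_ Hs]]. apply Hs. apply Hq; auto.
  - split; auto.
  - destruct HMg as [HMc [[e He] HMu]].
    assert (Heu : is_ultrafilter e) by auto.
    set (C1 := fun p => exists t, M t /\ p = uadd e t).
    assert (C1M : forall q, C1 q -> M q). { intros q [t [Ht ->]]. auto. }
    assert (HC1 : good C1 /\ semigroup C1 /\ forall q, C1 q -> S q).
    { split; [split; [|split]|split].
      - apply image_closed; auto.
      - exists (uadd e e). exists e. auto.
      - intros q [t [Ht ->]]. apply uadd_ultra; auto.
      - intros a b [t [Ht ->]] [t' [Ht' ->]]. exists (uadd t (uadd e t')).
        split; auto. rewrite uadd_assoc. reflexivity.
      - intros q Hq. auto. }
    destruct (Hmin C1 HC1 C1M e He) as [t [Ht Het]].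
    set (C2 := fun t => M t /\ uadd e t = e).
    assert (HC2 : good C2 /\ semigroup C2 /\ forall q, C2 q -> S q).
    { split; [split; [|split]|split].
      - apply stab_closed; auto.
      - exists t. split; auto.
      - intros q [Hq _]. auto.
      - intros a b [Ha Hae] [Hb Hbe]. split; auto. rewrite <- uadd_assoc. rewrite Hae. auto.
      - intros q [Hq _]. auto. }
    destruct (Hmin C2 HC2 (fun q Hq => proj1 Hq) e He) as [_ Hee].
    exists e. auto.
Qed.

Definition allU : uf -> Prop := fun p => is_ultrafilter p.
Lemma allU_closed : closed allU. Proof. intros p Hp _. exact Hp. Qed.

Lemma K_nonempty : exists e, in_K e.
Proof.
  destruct (min_lemma (fun C => good C /\ forall q s, C q -> is_ultrafilter s -> C (uadd q s)) allU)
    as [M [[[HMc [[e He] HMu]] HMr] Hmin]].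
  - tauto.
  - intros A HA Hch [C0 HC0] [p [Hp Hpi]]. split; [split; [|split]|].
    + apply closed_inter. intros C HC. apply HA. auto.
    + eauto.
    + intros q Hq. destruct (HA C0 HC0) as [[_ [_ Hu]] _]. apply Hu. apply Hq; auto.
    + intros q s Hq Hs C HC. destruct (HA C HC) as [_ Hr]. apply Hr; auto. apply Hq; auto.
  - split; [split; [|split]|].
    + exact allU_closed.
    + exists (pr 0). apply pr_ultra.
    + auto.
    + intros q s Hq Hs. apply uadd_ultra; auto.
  - exists e. split; auto. intros I [[q [Hq HIq]] [HIu HI]].
    set (f := uadd e q).
    assert (Hf : M f) by (apply HMr; auto).
    assert (HfI : I f) by (apply (HI q e HIq); auto).
    set (C := fun p => exists t, allU t /\ p = uadd f t).
    assert (HC : good C /\ forall q s, C q -> is_ultrafilter s -> C (uadd q s)).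
    { split; [split; [|split]|].
      - apply image_closed; auto. exact allU_closed.
      - exists (uadd f f). exists f. split; auto. apply HMu; auto.
      - intros p [t [Ht ->]]. apply uadd_ultra; auto.
      - intros p s [t [Ht ->]] Hs. exists (uadd t s). split.
        + apply uadd_ultra; auto.
        + apply uadd_assoc. }
    assert (CM : forall p, C p -> M p). { intros p [t [Ht ->]]. apply HMr; auto. }
    destruct (Hmin C HC CM e He) as [t [Ht Het]]. rewrite Het. apply (HI f t HfI Ht).
Qed.

Lemma K_ideal p s : in_K p -> is_ultrafilter s -> in_K (uadd p s) /\ in_K (uadd s p).
Proof.
  intros [Hp HK] Hs. split; split.
  - apply uadd_ultra; auto.
  - intros I HI. pose proof (HK I HI). destruct HI as [_ [_ HI']]. apply (HI' p s); auto.
  - apply uadd_ultra; auto.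
  - intros I HI. pose proof (HK I HI). destruct HI as [_ [_ HI']]. apply (HI' p s); auto.
Qed.

Lemma key (T : uf -> Prop) x : closed T -> (forall t, T t -> is_ultrafilter t) -> semigroup T ->
  T x -> in_K x -> exists u, T u /\ in_K u /\ uadd u u = u.
Proof.
  intros HT HTu Hsg Hx HxK.
  assert (Hxu : is_ultrafilter x) by auto.
  destruct (ellis (fun p => exists t, T t /\ p = uadd x t)) as [u [[t [Ht ->]] Hu]].
  - split; [|split].
    + apply image_closed; auto.
    + exists (uadd x x). eauto.
    + intros p [t [Ht ->]]. apply uadd_ultra; auto.
  - intros a b [t [Ht ->]] [t' [Ht' ->]]. exists (uadd t (uadd x t')). split.
    + apply Hsg; auto.
    + rewrite !uadd_assoc. reflexivity.
  - exists (uadd x t). split; [apply Hsg; auto|split; auto].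
    apply (proj1 (K_ideal x t HxK (HTu t Ht))).
Qed.

Lemma pow2_pos e : 0 < 2 ^ e. Proof. induction e; simpl; lia. Qed.
Lemma lt_pow2 n : n < 2 ^ n. Proof. induction n; simpl; lia. Qed.
Lemma pow_div j J : j <= J -> Nat.divide (2 ^ j) (2 ^ J).
Proof. intro H. exists (2 ^ (J - j)). rewrite <- Nat.pow_add_r. f_equal. lia. Qed.

Lemma res_exists p k : is_ultrafilter p -> 0 < k -> exists rho, p (fun m => m mod k = rho).
Proof.
  intros Hp Hk. apply NNPP. intro H.
  assert (Ht : forall t, t <= k -> p (fun m => t <= m mod k)).
  { induction t; intro Htk.
    - apply (uf_up p Hp _ _ (uf_top p Hp)). intros; lia.
    - assert (H1 : p (fun m => ~ m mod k = t)).
      { apply uf_compl; auto. intro H'. apply H. eauto. }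
      apply (uf_up p Hp _ _ (uf_cap p Hp _ _ (IHt ltac:(lia)) H1)). intros m [? ?]. lia. }
  destruct (uf_ne p Hp _ (Ht k (le_n k))) as [m Hm].
  pose proof (Nat.mod_upper_bound m k ltac:(lia)). lia.
Qed.

Lemma idem_div p k : is_ultrafilter p -> uadd p p = p -> 0 < k -> p (fun m => Nat.divide k m).
Proof.
  intros Hp Hpp Hk. destruct (res_exists p k Hp Hk) as [rho Hr].
  assert (H2 : uadd p p (fun m => m mod k = rho)) by (rewrite Hpp; exact Hr).
  unfold uadd in H2. apply (uf_up p Hp _ _ H2). intros n Hn.
  destruct (uf_ne p Hp _ (uf_cap p Hp _ _ Hn Hr)) as [m [H1 H3]]. unfold shift in H1.
  pose proof (Nat.div_mod_eq m k). pose proof (Nat.div_mod_eq (m + n) k).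
  exists ((m + n) / k - m / k). rewrite Nat.mul_sub_distr_r. nia.
Qed.

Fixpoint vf (f x : nat) : nat :=
  match f with
  | 0 => 0
  | S f' => if Nat.eqb x 0 then 0 else if Nat.even x then S (vf f' (Nat.div2 x)) else 0
  end.
Definition v (x : nat) := vf x x.

Lemma vf_spec f x : 0 < x -> x <= f -> exists o, Nat.odd o = true /\ x = 2 ^ (vf f x) * o.
Proof.
  revert x. induction f; intros x H1 H2; [lia|]. simpl.
  destruct (Nat.eqb_spec x 0); [lia|].
  destruct (Nat.even x) eqn:E.
  - apply Nat.even_spec in E. destruct E as [k Hk]. subst x. rewrite Nat.div2_double.
    destruct (IHf k) as [o [Ho Hk']]; try lia. exists o. split; auto.
    change (2 ^ S (vf f k)) with (2 * 2 ^ (vf f k)). rewrite <- Nat.mul_assoc, <- Hk'. reflexivity.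
  - exists x. split; [rewrite <- Nat.negb_even, E; auto|]. simpl. lia.
Qed.

Lemma vf_pow f e o : Nat.odd o = true -> 2 ^ e * o <= f -> vf f (2 ^ e * o) = e.
Proof.
  revert e. induction f; intros e Ho Hle.
  - destruct o; [discriminate|]. pose proof (pow2_pos e). nia.
  - pose proof (pow2_pos e). assert (o <> 0) by (intro; subst; discriminate).
    simpl. destruct (Nat.eqb_spec (2 ^ e * o) 0); [nia|].
    destruct e as [|e].
    + rewrite Nat.pow_0_r, Nat.mul_1_l in *. rewrite <- Nat.negb_odd, Ho. reflexivity.
    + change (2 ^ S e) with (2 * 2 ^ e) in *. rewrite <- Nat.mul_assoc in *.
      replace (Nat.even (2 * (2 ^ e * o))) with true by (symmetry; apply Nat.even_spec; eexists; reflexivity).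
      rewrite Nat.div2_double. f_equal. apply IHf; auto. pose proof (pow2_pos e). nia.
Qed.

Lemma v_spec x : 0 < x -> exists o, Nat.odd o = true /\ x = 2 ^ (v x) * o.
Proof. intro H. apply vf_spec; auto. Qed.
Lemma v_pow e o : Nat.odd o = true -> v (2 ^ e * o) = e.
Proof. intro H. apply vf_pow; auto. Qed.
Lemma v_add d x : 0 < d -> Nat.divide (2 ^ S (v d)) x -> v (x + d) = v d.
Proof.
  intros Hd [t Ht]. destruct (v_spec d Hd) as [o [Ho Hdo]].
  set (w := v d) in *. rewrite Ht. rewrite Hdo.
  change (2 ^ S w) with (2 * 2 ^ w).
  replace (t * (2 * 2 ^ w) + 2 ^ w * o) with (2 ^ w * (o + 2 * t)) by ring.
  apply v_pow. rewrite Nat.odd_add_mul_2. auto.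
Qed.

Definition D (j : nat) : nset := fun m => Nat.divide (2 ^ j) m.
Definition Ca (r a : nat) : nset := fun m => 0 < m /\ v m mod r = a.
Definition Ta r a : uf -> Prop := fun q => is_ultrafilter q /\ (forall j, q (D j)) /\ q (Ca r a).

Lemma D_mono j J m : j <= J -> D J m -> D j m.
Proof. intros H1 H2. eapply Nat.divide_trans; [apply pow_div, H1|exact H2]. Qed.

Lemma Ca_shift r a n m : Ca r a n -> D (S (v n)) m -> Ca r a (m + n).
Proof. intros [H1 H2] H3. split; [lia|]. rewrite v_add; auto. Qed.

Lemma Ta_closed r a : closed (Ta r a).
Proof.
  intros p Hp Hc. split; [auto|split].
  - intro j. apply Hc. intros q [_ [Hq _]]. auto.
  - apply Hc. intros q [_ [_ Hq]]. auto.
Qed.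

Lemma Ta_sg r a : semigroup (Ta r a).
Proof.
  intros x y [Hx [HxD HxC]] [Hy [HyD HyC]]. split; [apply uadd_ultra; auto|split].
  - intro j. unfold uadd. apply (uf_up y Hy _ _ (HyD j)). intros n Hn.
    apply (uf_up x Hx _ _ (HxD j)). intros m Hm. unfold shift, D in *. apply Nat.divide_add_r; auto.
  - unfold uadd. apply (uf_up y Hy _ _ HyC). intros n Hn.
    apply (uf_up x Hx _ _ (HxD (S (v n)))). intros m Hm. apply Ca_shift; auto.
Qed.

Lemma idem_in_K : exists u, in_K u /\ is_ultrafilter u /\ uadd u u = u.
Proof.
  destruct K_nonempty as [e He].
  destruct (key allU e allU_closed) as [u [Hu [HuK Huu]]].
  - auto.
  - intros a b Ha Hb. apply uadd_ultra; auto.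
  - apply (proj1 He).
  - auto.
  - exists u. auto.
Qed.

Lemma central_T r a : 1 <= r -> a < r -> exists u, minimal_idempotent u /\ Ta r a u.
Proof.
  intros Hr Ha.
  destruct (UL (fun X => exists j, X = (fun m => D j m /\ Ca r a m))) as [z [Hz HzB]].
  - intros X Y [j1 ->] [j2 ->]. exists (fun m => D (max j1 j2) m /\ Ca r a m). split; [eauto|].
    intros m [H1 H2]. split; split; auto; [apply (D_mono j1 (max j1 j2))|apply (D_mono j2 (max j1 j2))]; auto; lia.
  - intros X [j ->]. exists (2 ^ (a + r * j)). split.
    + apply pow_div. nia.
    + split; [apply pow2_pos|]. rewrite <- (Nat.mul_1_r (2 ^ _)). rewrite v_pow; auto.
      rewrite Nat.mul_comm, Nat.Div0.mod_add. apply Nat.mod_small; auto.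
  - assert (HzT : Ta r a z).
    { split; auto. split.
      - intro j. apply (uf_up z Hz _ _ (HzB _ (ex_intro _ j eq_refl))). tauto.
      - apply (uf_up z Hz _ _ (HzB _ (ex_intro _ 0 eq_refl))). tauto. }
    destruct idem_in_K as [u0 [Hu0K [Hu0 Hu0u]]].
    set (w := uadd u0 z).
    assert (HwK : in_K w) by (apply (proj1 (K_ideal u0 z Hu0K Hz))).
    assert (HwT : Ta r a w).
    { destruct HzT as [_ [HzD HzC]]. split; [apply uadd_ultra; auto|split].
      - intro j. unfold w, uadd. apply (uf_up z Hz _ _ (HzD j)). intros n Hn.
        apply (uf_up u0 Hu0 _ _ (idem_div u0 (2 ^ j) Hu0 Hu0u (pow2_pos j))).
        intros m Hm. unfold shift, D in *. apply Nat.divide_add_r; auto.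
      - unfold w, uadd. apply (uf_up z Hz _ _ HzC). intros n Hn.
        apply (uf_up u0 Hu0 _ _ (idem_div u0 (2 ^ S (v n)) Hu0 Hu0u (pow2_pos _))).
        intros m Hm. apply Ca_shift; auto. }
    destruct (key (Ta r a) w (Ta_closed r a)) as [u [HuT [HuK Huu]]]; auto.
    + intros t [Ht _]; auto.
    + apply Ta_sg.
    + exists u. split; auto. destruct HuT as [Hu [HuD HuC]].
      split; [auto|split; [|split]].
      * intros n Hn. destruct (uf_ne u Hu _ (uf_cap u Hu _ _ (uf_cap u Hu _ _ Hn (HuD (S n))) HuC))
          as [m [[-> Hd] [Hpos _]]].
        apply Nat.divide_pos_le in Hd; auto. pose proof (lt_pow2 n). simpl in Hd. lia.
      * rewrite Huu. intro; tauto.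
      * auto.
Qed.

Definition col (r N y : nat) : nat :=
  if andb (1 <=? y mod 2 ^ N) (y mod 2 ^ N <=? N) then S (v (y - y mod 2 ^ N) mod r) else 1.

Lemma col_range r N y : 1 <= r -> 1 <= col r N y <= r.
Proof.
  intro Hr. unfold col. destruct (andb _ _); [|lia].
  pose proof (Nat.mod_upper_bound (v (y - y mod 2 ^ N)) r ltac:(lia)). lia.
Qed.

Lemma mod_shift N x n : D N x -> (x + n) mod 2 ^ N = n mod 2 ^ N.
Proof. intros [t ->]. rewrite Nat.add_comm. apply Nat.Div0.mod_add. Qed.

Lemma mi_idem q : minimal_idempotent q -> is_ultrafilter q /\ uadd q q = q.
Proof.
  intros [Hq [_ [He _]]]. split; auto. apply functional_extensionality. intro A.
  apply propositional_extensionality. apply He.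
Qed.

Theorem theorem6 (r N : nat) (hr : 1 <= r) (hN : 1 <= N) :
  exists A : nat -> nset,
    (forall m : nat, exists i, 1 <= i <= r /\ A i m) /\
    (forall i j m, 1 <= i <= r -> 1 <= j <= r -> A i m -> A j m -> i = j) /\
    (forall i n, 1 <= i <= r -> 1 <= n <= N -> central (shift (A i) n)) /\
    (forall n, N < n -> exists! i, 1 <= i <= r /\ central (shift (A i) n)).
Proof.
  exists (fun i m => col r N m = i). split; [|split; [|split]].
  - intro m. exists (col r N m). split; auto. apply col_range; auto.
  - intros i j m _ _ H1 H2. congruence.
  - intros i n Hi Hn. destruct (central_T r (i - 1) hr ltac:(lia)) as [u [Hu [Huu [HuD HuC]]]].
    exists u. split; auto.
    apply (uf_up u Huu _ _ (uf_cap u Huu _ _ (HuD N) HuC)). intros x [Hx [Hx0 Hxv]].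
    unfold shift, col. rewrite (mod_shift N x n Hx).
    pose proof (lt_pow2 N). rewrite (Nat.mod_small n (2 ^ N)) by lia.
    replace (1 <=? n) with true by (symmetry; apply Nat.leb_le; lia).
    replace (n <=? N) with true by (symmetry; apply Nat.leb_le; lia).
    simpl. rewrite Nat.add_sub. lia.
  - intros n Hn.
    assert (Hg : exists g J, 1 <= g <= r /\ forall x, D J x -> col r N (x + n) = g).
    { destruct (andb (1 <=? n mod 2 ^ N) (n mod 2 ^ N <=? N)) eqn:Eb.
      - apply andb_prop in Eb. destruct Eb as [E1 E2]. apply Nat.leb_le in E1, E2.
        set (s0 := n mod 2 ^ N) in *. set (d := n - s0).
        exists (S (v d mod r)), (N + S (v d)). split.
        + pose proof (Nat.mod_upper_bound (v d) r ltac:(lia)). lia.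
        + intros x Hx. unfold col. rewrite (mod_shift N x n (D_mono N (N + S (v d)) x ltac:(lia) Hx)).
          fold s0. replace (1 <=? s0) with true by (symmetry; apply Nat.leb_le; lia).
          replace (s0 <=? N) with true by (symmetry; apply Nat.leb_le; lia).
          simpl. replace (x + n - s0) with (x + d) by (unfold d; lia).
          rewrite v_add; auto; [unfold d; lia|]. apply (D_mono _ (N + S (v d))); auto; lia.
      - exists 1, N. split; [lia|]. intros x Hx. unfold col. rewrite (mod_shift N x n Hx).
        rewrite Eb. reflexivity. }
    destruct Hg as [g [J [Hg HJ]]].
    destruct (central_T r 0 hr ltac:(lia)) as [u0 [Hu0 _]].
    exists g. split.
    + split; auto. exists u0. split; auto. destruct (mi_idem u0 Hu0) as [Hu Huu].
      apply (uf_up u0 Hu _ _ (idem_div u0 (2 ^ J) Hu Huu (pow2_pos J))).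
      intros x Hx. unfold shift. apply HJ. exact Hx.
    + intros j [Hj [q [Hq Hqs]]]. destruct (mi_idem q Hq) as [Hqu Hqq].
      destruct (uf_ne q Hqu _ (uf_cap q Hqu _ _ (idem_div q (2 ^ J) Hqu Hqq (pow2_pos J)) Hqs))
        as [x [Hx Hxj]].
      unfold shift in Hxj. rewrite (HJ x Hx) in Hxj. exact Hxj.
Qed.
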